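(* (I) The positive cone $C_+^\dagger$ is equal to $\widehat{\mathbf{n}}_{\Lambda,+}(D^\dagger)$, the dual cone of $\mathbf{n}_{\Lambda,+}$ in $D^\dagger$. (II) The non-negative divisors in the first quadrant of $D^\dagger$ are given by $$C_+^\dagger\cap D_+^\dagger=\{\varrho\in D_+^\dagger:\langle\varrho,n^{\delta'}_{\mathfrak{s}}\rangle\ge0\text{ for all }\mathfrak{s}\in\Lambda^{(n-1)},\ \delta'\in\Lambda^{(0)}\setminus\mathfrak{s}\text{ with }\mathfrak{s}^\perp_{\delta'}\setminus\mathfrak{s}\ne\emptyset\},$$ $$\mathrm{Int}(C_+^\dagger)\cap\mathrm{Int}(D_+^\dagger)=\{\varrho\in \mathrm{Int}(D_+^\dagger):\langle\varrho,n^{\delta'}_{\mathfrak{s}}\rangle>0\text{ for all }\mathfrak{s}\in\Lambda^{(n-1)},\ \delta'\in\Lambda^{(0)}\setminus\mathfrak{s}\text{ with }\mathfrak{s}^\perp_{\delta'}\setminus\mathfrak{s}\ne\emptyset\},$$ and these satisfy $\iota^*(C_+^\dagger\cap D_+^\dagger)=\mathbf{n}^\dagger_{\Lambda,+}$ and $\iota^*(\mathrm{Int}(C_+^\dagger)\cap\mathrm{Int}(D_+^\dagger))=\mathrm{Int}(\mathbf{n}^\dagger_{\Lambda,+})$.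
   Context: $L$ is a lattice of rank $n$ with dual $L^*$; $(\Delta,L)$ is a reflexive polytope in $L_{\mathbb{R}}$ and $\Lambda$ a simplicial decomposition of $\partial\Delta$ with vertex set $\Lambda^{(0)}=L\cap(\partial\Delta\setminus\bigcup\{\mathrm{Int}(F):F\text{ facet of }\Delta\})$, $L$ generated by $\Lambda^{(0)}$; $\Lambda^{(n-1)}$ is the set of $(n-1)$-simplices, and ''$\delta\in\mathfrak{s}$'' means $\delta$ is a vertex of $\mathfrak{s}$. $D_\Delta=\bigoplus_{\delta\in\Lambda^{(0)}}\mathbb{Z}e^\delta$, $\beta:D_\Delta\to L$, $e^\delta\mapsto\delta$, $\mathbf{n}_\Delta=\ker\beta$, $\iota:\mathbf{n}_\Delta\hookrightarrow D_\Delta$ the inclusion; $D^\dagger=D_\Delta^\dagger\otimes\mathbb{Q}$ with basis $e^{\delta\dagger}$ dual to $e^\delta$, $\iota^*:D^\dagger\to\mathbf{n}_\Delta^\dagger\otimes\mathbb{Q}$ the restriction, $\beta^*:L^*_{\mathbb{Q}}\to D^\dagger$ the dual of $\beta$. $D_+^\dagger=\{\varrho\in D^\dagger:\langle\varrho,e^\delta\rangle\ge0\ \forall\delta\}$, with interior given by strict inequalities. For $\delta\in\Lambda^{(0)}$, $\mathfrak{s}^\perp_\delta$ is the unique simplex of $\Lambda$ whose relative interior contains $-\delta$. For $\mathfrak{s}\in\Lambda^{(n-1)}$ and $\delta'\in\Lambda^{(0)}\setminus\mathfrak{s}$ define $n^{\delta'}_{\mathfrak{s}}=e^{\delta'}+\sum_{\delta\in\mathfrak{s}}n^{\delta'}_{\delta,\mathfrak{s}}e^\delta\in\mathbf{n}_\Delta\otimes\mathbb{Q}$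 where the rationals $n^{\delta'}_{\delta,\mathfrak{s}}$ are determined by $\delta'+\sum_{\delta\in\mathfrak{s}}n^{\delta'}_{\delta,\mathfrak{s}}\delta=0$ in $L_{\mathbb{Q}}$. Let $\mathbf{n}_{\Lambda,+}=\sum_{\mathfrak{s},\delta'}\mathbb{Q}_{\ge0}n^{\delta'}_{\mathfrak{s}}\subseteq\mathbf{n}_\Delta\otimes\mathbb{Q}$, $\mathbf{n}^\dagger_{\Lambda,+}$ its dual cone in $\mathbf{n}_\Delta^\dagger\otimes\mathbb{Q}$, and $\widehat{\mathbf{n}}_{\Lambda,+}(D^\dagger)=\{\varrho\in D^\dagger:\langle\varrho,n\rangle\ge0\ \forall n\in\mathbf{n}_{\Lambda,+}\}$. For $\varrho\in D^\dagger$ and $\mathfrak{s}\in\Lambda^{(n-1)}$, let $\varrho'_{\mathfrak{s}}$ be the unique element of $\beta^*(L^*_{\mathbb{Q}})$ with $\langle\varrho'_{\mathfrak{s}},e^\delta\rangle=\langle\varrho,e^\delta\rangle$ for all $\delta\in\mathfrak{s}$, and $\varrho_{\mathfrak{s}}=\varrho-\varrho'_{\mathfrak{s}}$. The positive cone is $C_+^\dagger=\{\varrho\in D^\dagger:\langle\varrho_{\mathfrak{s}},e^{\delta'}\rangle\ge0\text{ for all }\mathfrak{s}\in\Lambda^{(n-1)},\ \delta'\in\Lambda^{(0)}\setminus\mathfrak{s}\}$. *)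

(* Defs.v *)
(* L = Z^n inside L_Q = Q^n, realised as row vectors 'rV[rat]_n. *)
From HB Require Import structures.
From mathcomp Require Import all_boot all_order all_algebra.
Set Implicit Arguments. Unset Strict Implicit. Unset Printing Implicit Defensive.
Import Order.TTheory GRing.Theory Num.Theory.
Local Open Scope ring_scope.

Section Reflexive.
Variable n : nat.

(* the pairing L*_Q x L_Q -> Q *)
Definition dot (u x : 'rV[rat]_n) : rat := \sum_(k < n) u 0 k * x 0 k.

Definition integral_vec (x : 'rV[rat]_n) : Prop := forall k, x 0 k \is a Num.int.

Definition conv_hull (V : seq 'rV[rat]_n) (x : 'rV[rat]_n) : Prop :=
  exists lam : 'I_(size V) -> rat,
    [/\ forall j, 0 <= lam j, \sum_j lam j = 1 & x = \sum_j lam j *: V`_j].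

(* Delta is given by its facet normals U (= vertices of the dual polytope):
   Delta = { x | <u,x> >= -1 for all u in U }. *)
Variable U : seq 'rV[rat]_n.

Definition in_polytope (x : 'rV[rat]_n) : Prop := forall u, u \in U -> -1 <= dot u x.

Definition on_boundary (x : 'rV[rat]_n) : Prop :=
  in_polytope x /\ exists2 u, u \in U & dot u x = -1.

Definition in_facet_relint (x : 'rV[rat]_n) : Prop :=
  in_polytope x /\
  exists2 u, u \in U & dot u x = -1 /\ (forall u', u' \in U -> u' != u -> -1 < dot u' x).

(* (Delta, L) is reflexive, U being the irredundant list of facet normals:
   U consists of lattice points of L*, Delta is a lattice polytope (the convex
   hull of finitely many lattice points), and every u in U defines a facet. *)
Definition is_reflexive : Prop :=
  [/\ forall u, u \in U -> integral_vec u,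
      uniq U,
      exists V : seq 'rV[rat]_n,
        (forall v, v \in V -> integral_vec v) /\
        (forall x, in_polytope x <-> conv_hull V x)
    & forall u, u \in U -> exists x,
        dot u x < -1 /\ (forall u', u' \in U -> u' != u -> -1 <= dot u' x)].

(* The vertex set Lambda^(0) is indexed by a finite type I via vert. *)
Variables (I : finType) (vert : I -> 'rV[rat]_n).

Definition is_vertex_set : Prop :=
  injective vert /\
  forall x, (exists i, vert i = x) <->
            [/\ integral_vec x, on_boundary x & ~ in_facet_relint x].

Definition generates_lattice : Prop :=
  forall x, integral_vec x -> exists c : I -> int, x = \sum_i (c i)%:~R *: vert i.

Definition simplex_hull (s : {set I}) (x : 'rV[rat]_n) : Prop :=
  exists lam : I -> rat,
    [/\ forall i, 0 <= lam i, forall i, i \notin s -> lam i = 0,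
        \sum_i lam i = 1 & x = \sum_i lam i *: vert i].

Definition aff_indep (s : {set I}) : Prop :=
  forall lam : I -> rat, (forall i, i \notin s -> lam i = 0) ->
    \sum_i lam i = 0 -> \sum_i lam i *: vert i = 0 -> forall i, lam i = 0.

Definition cone_relint (s : {set I}) (x : 'rV[rat]_n) : Prop :=
  exists lam : I -> rat, (forall i, i \in s -> 0 < lam i) /\
    x = \sum_(i in s) lam i *: vert i.

Variable Lam : {set {set I}}.

Definition simplicial_decomp : Prop :=
  [/\ forall i, [set i] \in Lam,
      forall s t : {set I}, s \in Lam -> t \subset s -> t != set0 -> t \in Lam,
      forall s, s \in Lam -> aff_indep s,
      forall x, (exists2 s, s \in Lam & simplex_hull s x) <-> on_boundary x
    & forall (s t : {set I}) x, s \in Lam -> t \in Lam -> simplex_hull s x -> simplex_hull t x ->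
        simplex_hull (s :&: t) x].

(* D (x) Q and D^dagger, both realised as {ffun I -> rat} *)
Local Notation Dvec := {ffun I -> rat}.

Definition pair (rho c : Dvec) : rat := \sum_i rho i * c i.

Definition beta (c : Dvec) : 'rV[rat]_n := \sum_i c i *: vert i.

(* n_Delta (x) Q = ker beta *)
Definition in_kernel (c : Dvec) : Prop := beta c = 0.

Definition top_simplex (s : {set I}) : Prop := s \in Lam /\ #|s| = n.

Definition is_nvec (s : {set I}) (d' : I) (c : Dvec) : Prop :=
  [/\ c d' = 1, forall i, i != d' -> i \notin s -> c i = 0 & beta c = 0].

Definition nLam_gen (c : Dvec) : Prop :=
  exists s d', [/\ top_simplex s, d' \notin s & is_nvec s d' c].

Definition nLam_cone (x : Dvec) : Prop :=
  exists (m : nat) (lam : 'I_m -> rat) (g : 'I_m -> Dvec),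
    (forall j, 0 <= lam j /\ nLam_gen (g j)) /\ x = [ffun i => \sum_j lam j * g j i].

Definition hat_nLam (rho : Dvec) : Prop := forall x, nLam_cone x -> 0 <= pair rho x.

(* C_+^dagger ; rho'_s = beta^* y with y determined by agreement on s *)
Definition C_plus (rho : Dvec) : Prop :=
  forall s, top_simplex s -> forall d', d' \notin s ->
    forall y : 'rV[rat]_n, (forall i, i \in s -> dot y (vert i) = rho i) ->
      0 <= rho d' - dot y (vert d').

Definition D_plus (rho : Dvec) : Prop := forall i, 0 <= rho i.
Definition D_plus_int (rho : Dvec) : Prop := forall i, 0 < rho i.

Definition interior_D (S : Dvec -> Prop) (rho : Dvec) : Prop :=
  exists2 eps : rat, 0 < eps &
    forall rho' : Dvec, (forall i, `|rho' i - rho i| <= eps) -> S rho'.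

Definition perp_not_sub (s : {set I}) (d' : I) : Prop :=
  exists t : {set I}, [/\ t \in Lam, cone_relint t (- vert d') & ~~ (t \subset s)].

(* n_Delta^dagger (x) Q : Q-linear functionals on ker beta, represented by
   functions Dvec -> rat of which only the restriction to ker beta matters. *)
Definition linear_on_K (phi : Dvec -> rat) : Prop :=
  forall (a b : rat) (x y : Dvec), in_kernel x -> in_kernel y ->
    phi [ffun i => a * x i + b * y i] = a * phi x + b * phi y.

Definition iota_star_image (S : Dvec -> Prop) (phi : Dvec -> rat) : Prop :=
  exists2 rho, S rho & forall k, in_kernel k -> phi k = pair rho k.

Definition ndag_plus (phi : Dvec -> rat) : Prop := forall x, nLam_cone x -> 0 <= phi x.

(* topological interior in n_Delta^dagger (x) Q, w.r.t. the operator norm dual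
   to the sup norm on ker beta *)
Definition interior_ndag (S : (Dvec -> rat) -> Prop) (phi : Dvec -> rat) : Prop :=
  exists2 eps : rat, 0 < eps &
    forall psi : Dvec -> rat, linear_on_K psi ->
      (forall k : Dvec, in_kernel k -> (forall i, `|k i| <= 1) -> `|psi k - phi k| <= eps) ->
      S psi.

End Reflexive.

(* Main.v *)
Require Import Defs.
From HB Require Import structures.
From mathcomp Require Import all_boot all_order all_algebra.
From mathcomp Require Import ring lra.
From Stdlib Require Import Classical.
Set Implicit Arguments. Unset Strict Implicit. Unset Printing Implicit Defensive.
Import Order.TTheory GRing.Theory Num.Theory.
Local Open Scope ring_scope.


Section Alg.
Variable n : nat.
Variables (I : finType) (vert : I -> 'rV[rat]_n).
Local Notation Dvec := {ffun I -> rat}.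

Lemma dot_sum (J : finType) (u : 'rV[rat]_n) (a : J -> rat) (v : J -> 'rV[rat]_n) :
  dot u (\sum_j a j *: v j) = \sum_j a j * dot u (v j).
Proof.
rewrite /dot.
under eq_bigr => k _ do rewrite summxE big_distrr /=.
rewrite exchange_big /=; apply: eq_bigr => j _.
rewrite big_distrr /=; apply: eq_bigr => k _; rewrite mxE /=; ring.
Qed.

Lemma dot_scale (u x : 'rV[rat]_n) (a : rat) : dot u (a *: x) = a * dot u x.
Proof. rewrite /dot big_distrr; apply: eq_bigr => k _; rewrite mxE /=; ring. Qed.

Lemma dotC (u x : 'rV[rat]_n) : dot u x = dot x u.
Proof. by rewrite /dot; apply: eq_bigr => k _; rewrite mulrC. Qed.

Lemma dot_sum_l (J : finType) (u : 'rV[rat]_n) (a : J -> rat) (v : J -> 'rV[rat]_n) :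
  dot (\sum_j a j *: v j) u = \sum_j a j * dot (v j) u.
Proof. by rewrite dotC dot_sum; apply: eq_bigr => j _; rewrite dotC. Qed.

Lemma dot_opp (u x : 'rV[rat]_n) : dot u (- x) = - dot u x.
Proof. by rewrite -scaleN1r dot_scale mulN1r. Qed.

Lemma dot_add (u x y : 'rV[rat]_n) : dot u (x + y) = dot u x + dot u y.
Proof. by rewrite /dot -big_split; apply: eq_bigr => k _; rewrite mxE mulrDr. Qed.

Lemma dot0 (u : 'rV[rat]_n) : dot u 0 = 0.
Proof. by rewrite /dot big1 // => k _; rewrite mxE mulr0. Qed.

Lemma beta_comb (J : finType) (a : J -> rat) (g : J -> Dvec) :
  beta vert [ffun i => \sum_j a j * g j i] = \sum_j a j *: beta vert (g j).
Proof.
rewrite /beta.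
under eq_bigr => i _ do rewrite ffunE scaler_suml.
rewrite exchange_big /=; apply: eq_bigr => j _.
rewrite scaler_sumr; apply: eq_bigr => i _; by rewrite scalerA.
Qed.

Lemma kernel_comb (J : finType) (a : J -> rat) (g : J -> Dvec) :
  (forall j, in_kernel vert (g j)) -> in_kernel vert [ffun i => \sum_j a j * g j i].
Proof.
move=> H; rewrite /in_kernel beta_comb big1 // => j _.
by rewrite H scaler0.
Qed.

Lemma pair_comb (J : finType) (rho : Dvec) (a : J -> rat) (g : J -> Dvec) :
  pair rho [ffun i => \sum_j a j * g j i] = \sum_j a j * pair rho (g j).
Proof.
rewrite /pair.
under eq_bigr => i _ do rewrite ffunE big_distrr.
rewrite exchange_big /=; apply: eq_bigr => j _.
rewrite big_distrr; apply: eq_bigr => i _ /=; ring.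
Qed.

Lemma kernel0 : in_kernel vert [ffun => 0].
Proof. by rewrite /in_kernel /beta big1 // => i _; rewrite ffunE scale0r. Qed.

Lemma linK0 (phi : Dvec -> rat) : linear_on_K vert phi -> phi [ffun => 0] = 0.
Proof.
move=> H.
have E : ([ffun => 0] : Dvec) = [ffun i => 0 * ([ffun => 0] : Dvec) i + 0 * ([ffun=>0]:Dvec) i].
  by apply/ffunP => i; rewrite !ffunE mul0r addr0.
rewrite {1}E H; [ring | exact: kernel0 | exact: kernel0]. Qed.

Lemma linK_scale (phi : Dvec -> rat) (a : rat) (x : Dvec) : linear_on_K vert phi ->
  in_kernel vert x -> phi [ffun i => a * x i] = a * phi x.
Proof.
move=> H kx.
have E : ([ffun i => a * x i] : Dvec) = [ffun i => a * x i + 0 * x i].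
  by apply/ffunP => i; rewrite !ffunE mul0r addr0.
by rewrite E H //; ring.
Qed.

Lemma linK_seq (J : eqType) (r : seq J) (phi : Dvec -> rat) (a : J -> rat) (g : J -> Dvec) :
  linear_on_K vert phi -> (forall j, in_kernel vert (g j)) ->
  phi [ffun i => \sum_(j <- r) a j * g j i] = \sum_(j <- r) a j * phi (g j).
Proof.
move=> H kg; elim: r => [|j r IH].
  rewrite big_nil -[RHS](linK0 H); congr phi; apply/ffunP => i; by rewrite !ffunE big_nil.
have kr : in_kernel vert [ffun i => \sum_(j <- r) a j * g j i].
  rewrite /in_kernel /beta.
  under eq_bigr => i _ do rewrite ffunE scaler_suml.
  rewrite exchange_big /= big1 // => j' _.
  under eq_bigr => i _ do rewrite -scalerA.
  by rewrite -scaler_sumr -/(beta vert (g j')) kg scaler0.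
have E : ([ffun i => \sum_(j0 <- j :: r) a j0 * g j0 i] : Dvec) =
   [ffun i => a j * g j i + 1 * [ffun i => \sum_(j <- r) a j * g j i] i].
  by apply/ffunP => i; rewrite !ffunE big_cons mul1r.
by rewrite E H // IH big_cons mul1r.
Qed.

Lemma linK_comb (J : finType) (phi : Dvec -> rat) (a : J -> rat) (g : J -> Dvec) :
  linear_on_K vert phi -> (forall j, in_kernel vert (g j)) ->
  phi [ffun i => \sum_j a j * g j i] = \sum_j a j * phi (g j).
Proof. exact: linK_seq. Qed.

Lemma pair_betastar (y : 'rV[rat]_n) (c : Dvec) :
  pair [ffun i => dot y (vert i)] c = dot y (beta vert c).
Proof.
rewrite /beta dot_sum /pair; apply: eq_bigr => i _; rewrite ffunE mulrC //.
Qed.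

End Alg.



Section Geom.
Variable n : nat.
Variable U : seq 'rV[rat]_n.
Variables (I : finType) (vert : I -> 'rV[rat]_n).
Variable Lam : {set {set I}}.
Hypothesis Hrefl : is_reflexive U.
Hypothesis Hvert : is_vertex_set U vert.
Hypothesis Hsd : simplicial_decomp U vert Lam.
Local Notation Dvec := {ffun I -> rat}.

Lemma vert_bd i : on_boundary U (vert i).
Proof. by case: Hvert => _ /(_ (vert i)) [/(_ (ex_intro _ i erefl)) []]. Qed.

Lemma common_hyp (s : {set I}) : s \in Lam -> s != set0 ->
  exists2 u, u \in U & forall i, i \in s -> dot u (vert i) = -1.
Proof.
move=> sL s0.
have kpos : (0 < #|s|)%N by rewrite card_gt0.
pose lam i : rat := if i \in s then (#|s|%:R)^-1 else 0.
have lam_ge0 i : 0 <= lam i by rewrite /lam; case: ifP => // _; rewrite invr_ge0 ler0n.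
have sum1 : \sum_i lam i = 1.
  rewrite /lam -big_mkcond /= sumr_const -[LHS]mulr_natr mulVf //.
  by rewrite pnatr_eq0 -lt0n.
pose x := \sum_i lam i *: vert i.
have hx : simplex_hull vert s x.
  exists lam; split => // i /negbTE; by rewrite /lam => ->.
case: Hsd => _ _ _ Hcov _.
have [_ [u uU hu]] : on_boundary U x by apply/Hcov; exists s.
exists u => // i iS.
have ge i' : -1 <= dot u (vert i') by case: (vert_bd i') => /(_ u uU).
have S0 : \sum_i lam i * (dot u (vert i) + 1) = 0.
  under eq_bigr => j _ do rewrite mulrDr mulr1.
  by rewrite big_split /= sum1 -dot_sum -/x hu addNr.
have nn : forall j, predT j -> 0 <= lam j * (dot u (vert j) + 1).
  move=> j _; apply: mulr_ge0 => //; by rewrite -lerBlDr sub0r.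
have := psumr_eq0P nn S0 (i:=i) isT; move/eqP.
rewrite mulf_eq0 /lam iS invr_eq0 pnatr_eq0 -[(#|s| == 0)%N]negbK -lt0n kpos /=.
by rewrite addr_eq0 => /eqP.
Qed.

Lemma lin_indep (s : {set I}) : s \in Lam -> forall a : I -> rat, (forall i, i \notin s -> a i = 0) ->
  \sum_i a i *: vert i = 0 -> forall i, a i = 0.
Proof.
move=> sL a ha hs.
case: Hsd => _ _ Haff _ _.
have [s0|s0] := eqVneq s set0.
  move=> i; apply: ha; by rewrite s0 in_set0.
have [u uU hu] := common_hyp sL s0.
apply: (Haff s sL a ha) => //.
have E : \sum_i a i * dot u (vert i) = - \sum_i a i.
  rewrite -sumrN; apply: eq_bigr => i _.
  case: (boolP (i \in s)) => [iS | /ha ->]; first by rewrite hu // mulrN1.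
  by rewrite !mul0r oppr0.
have : dot u (\sum_i a i *: vert i) = 0 by rewrite hs dot0.
rewrite dot_sum E => /eqP; rewrite oppr_eq0 => /eqP //.
Qed.

Definition Mx (s : {set I}) : 'M[rat]_(#|s|, n) := \matrix_(k < #|s|, j < n) vert (enum_val k) 0 j.

Lemma row_Mx (s : {set I}) k : row k (Mx s) = vert (enum_val k).
Proof. by apply/rowP => j; rewrite !mxE. Qed.

Definition coefv (s : {set I}) (v : 'rV[rat]_#|s|) (i : I) : rat := \sum_(k | enum_val k == i) v 0 k.

Lemma mulMx (s : {set I}) (v : 'rV_#|s|) : v *m Mx s = \sum_i coefv v i *: vert i.
Proof.
rewrite mulmx_sum_row.
under eq_bigr do rewrite row_Mx.
rewrite /coefv.
under [RHS]eq_bigr => i _ do rewrite scaler_suml.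
rewrite (partition_big (@enum_val _ (mem s)) predT) //=.
apply: eq_bigr => i _; apply: eq_bigr => k /eqP <- //.
Qed.

Lemma coefv_out (s : {set I}) (v : 'rV_#|s|) i : i \notin s -> coefv v i = 0.
Proof.
move=> iS; rewrite /coefv big_pred0 // => k.
apply/negbTE; apply: contra iS => /eqP <-; exact: enum_valP.
Qed.

Lemma coefv_val (s : {set I}) (v : 'rV_#|s|) k : coefv v (enum_val k) = v 0 k.
Proof.
by rewrite /coefv (big_pred1 k) // => k'; rewrite (inj_eq enum_val_inj).
Qed.

Lemma ker_ex m p (A : 'M[rat]_(m, p)) : ~~ row_free A -> exists2 v : 'rV_m, v != 0 & v *m A = 0.
Proof.
rewrite -kermx_eq0 => hK.
have /existsP [i Hi] : [exists i, row i (kermx A) != 0].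
  apply: contraNT hK => /existsPn H; apply/eqP/row_matrixP => i.
  by rewrite row0; apply/eqP; rewrite -[_ == _]negbK H.
exists (row i (kermx A)) => //.
by rewrite -row_mul mulmx_ker row0.
Qed.

Lemma Mx_free (s : {set I}) : s \in Lam -> row_free (Mx s).
Proof.
move=> sL; apply/negPn/negP => /ker_ex [v v0 hv].
rewrite mulMx in hv.
have H := lin_indep sL (@coefv_out s v) hv.
move/eqP: v0; apply; apply/rowP => k; rewrite !mxE -coefv_val; exact: H.
Qed.

Lemma card_le (s : {set I}) : s \in Lam -> (#|s| <= n)%N.
Proof. by move/Mx_free => /eqP <-; exact: rank_leq_col. Qed.

Lemma span_top (s : {set I}) : s \in Lam -> #|s| = n -> forall x : 'rV[rat]_n,
  exists a : I -> rat, (forall i, i \notin s -> a i = 0) /\ x = \sum_i a i *: vert i.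
Proof.
move=> sL cs x.
have hf : row_full (Mx s) by rewrite /row_full; move: (Mx_free sL) => /eqP ->; rewrite cs.
have /submxP [D ->] : (x <= Mx s)%MS by apply: submx_full.
exists (coefv D); split; [exact: coefv_out | exact: mulMx].
Qed.

Lemma solve_top (s : {set I}) : s \in Lam -> #|s| = n -> forall r : I -> rat,
  exists y : 'rV[rat]_n, forall i, i \in s -> dot y (vert i) = r i.
Proof.
move=> sL cs r.
have hf : row_full (Mx s)^T.
  by rewrite /row_full mxrank_tr; move: (Mx_free sL) => /eqP ->.
have /submxP [D hD] : ((\row_k r (enum_val k)) <= (Mx s)^T)%MS by apply: submx_full.
exists D => i iS.
have := congr1 (fun M : 'rV_#|s| => M 0 (enum_rank_in iS i)) hD.
rewrite !mxE (enum_rankK_in iS iS) => ->.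
rewrite /dot; apply: eq_bigr => j _; rewrite !mxE (enum_rankK_in iS iS) //.
Qed.


Lemma sum_delta (d : I) : \sum_i (i == d)%:R *: vert i = vert d.
Proof.
rewrite (bigD1 d) //= eqxx scale1r big1 ?addr0 // => i /negbTE ->.
by rewrite scale0r.
Qed.

Lemma gen_exists s d' : top_simplex n Lam s -> d' \notin s -> exists c, is_nvec vert s d' c.
Proof.
case=> sL cs dS.
have [a [ha hx]] := span_top sL cs (- vert d').
exists [ffun i => a i + (i == d')%:R]; split.
- by rewrite ffunE ha // eqxx add0r.
- by move=> i /negbTE id iS; rewrite ffunE ha // id add0r.
- rewrite /beta.
  under eq_bigr => i _ do rewrite ffunE scalerDl.
  by rewrite big_split /= -hx sum_delta addNr.
Qed.

Lemma gen_unique s d' c1 c2 : s \in Lam -> is_nvec vert s d' c1 -> is_nvec vert s d' c2 -> c1 = c2.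
Proof.
move=> sL [h1 z1 b1] [h2 z2 b2].
have H := @lin_indep s sL (fun i => c1 i - c2 i).
apply/ffunP => i; apply/eqP; rewrite -subr_eq0; apply/eqP; apply: H.
- move=> j jS; have [->|jd] := eqVneq j d'; first by rewrite h1 h2 subrr.
  by rewrite z1 // z2 // subrr.
- under eq_bigr => j _ do rewrite scalerBl.
  by rewrite sumrB -/(beta vert c1) -/(beta vert c2) b1 b2 subrr.
Qed.

Lemma pair_gen s d' c (rho : Dvec) (y : 'rV[rat]_n) : is_nvec vert s d' c ->
  (forall i, i \in s -> dot y (vert i) = rho i) -> pair rho c = rho d' - dot y (vert d').
Proof.
move=> [h1 z1 b1] hy.
have E : pair rho c = pair [ffun i => rho i - dot y (vert i)] c +
                     pair [ffun i => dot y (vert i)] c.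
  rewrite /pair -big_split /=; apply: eq_bigr => i _; rewrite !ffunE; ring.
rewrite E pair_betastar b1 dot0 addr0 /pair (bigD1 d') //= big1.
  by rewrite ffunE h1 mulr1 addr0.
move=> i id; case: (boolP (i \in s)) => iS.
  by rewrite ffunE hy // subrr mul0r.
by rewrite z1 // mulr0.
Qed.

Definition Gpos (rho : Dvec) : Prop := forall c, nLam_gen vert Lam c -> 0 <= pair rho c.

Lemma Cplus_Gpos rho : C_plus vert Lam rho <-> Gpos rho.
Proof.
split.
- move=> H c [s [d' [ts dS gc]]].
  have [y hy] := solve_top ts.1 ts.2 rho.
  rewrite (pair_gen gc hy); exact: (H s ts d' dS y hy).
- move=> H s ts d' dS y hy.
  have [c gc] := gen_exists ts dS.
  rewrite -(pair_gen gc hy); apply: H; by exists s, d'.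
Qed.

Lemma gen_kernel c : nLam_gen vert Lam c -> in_kernel vert c.
Proof. by case=> s [d' [_ _ [_ _ b]]]. Qed.

Lemma gen_cone c : nLam_gen vert Lam c -> nLam_cone vert Lam c.
Proof.
move=> gc; exists 1%N, (fun _ => 1), (fun _ => c); split => //.
apply/ffunP => i; by rewrite ffunE big_ord1 mul1r.
Qed.

Lemma Gpos_hat rho : Gpos rho <-> hat_nLam vert Lam rho.
Proof.
split.
- move=> H x [m [lam [g [hg ->]]]].
  rewrite pair_comb; apply: sumr_ge0 => j _.
  have [l0 gj] := hg j; apply: mulr_ge0 => //; exact: H.
- by move=> H c /gen_cone; apply: H.
Qed.

Lemma cone_kernel x : nLam_cone vert Lam x -> in_kernel vert x.
Proof.
move=> [m [lam [g [hg ->]]]]; apply: kernel_comb => j; apply: gen_kernel; exact: (hg j).2.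
Qed.

End Geom.



Lemma max_seq (T : eqType) (s : seq T) (f : T -> rat) x0 : x0 \in s ->
  exists2 x, x \in s & forall y, y \in s -> f y <= f x.
Proof.
elim: s x0 => // a s IH x0 _.
case: s IH => [|b s'] IH.
  by exists a; rewrite ?inE // => y; rewrite inE => /eqP ->.
have [x xs hx] := IH b (mem_head b s').
have [le|lt] := leP (f a) (f x).
  exists x; first by rewrite inE xs orbT.
  by move=> y; rewrite inE => /orP [/eqP ->|/hx].
exists a; first by rewrite inE eqxx.
move=> y; rewrite inE => /orP [/eqP ->//|/hx h]; apply: (le_trans h); exact: ltW.
Qed.

Section Ray.
Variable n : nat.
Variable U : seq 'rV[rat]_n.
Variables (I : finType) (vert : I -> 'rV[rat]_n).
Variable Lam : {set {set I}}.
Hypothesis Hrefl : is_reflexive U.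
Hypothesis Hvert : is_vertex_set U vert.
Hypothesis Hsd : simplicial_decomp U vert Lam.
Local Notation Dvec := {ffun I -> rat}.

Lemma dot_sumP (J : finType) (P : pred J) (u : 'rV[rat]_n) (a : J -> rat) (v : J -> 'rV[rat]_n) :
  dot u (\sum_(j | P j) a j *: v j) = \sum_(j | P j) a j * dot u (v j).
Proof.
rewrite big_mkcond /= [RHS]big_mkcond /=.
have -> : \sum_j (if P j then a j *: v j else 0) = \sum_j (if P j then a j else 0) *: v j.
  by apply: eq_bigr => j _; case: (P j) => //; rewrite scale0r.
rewrite dot_sum; apply: eq_bigr => j _; by case: (P j); rewrite ?mul0r.
Qed.

Lemma dot_pos (w : 'rV[rat]_n) : w != 0 -> 0 < dot w w.
Proof.
move=> w0; rewrite lt_def; apply/andP; split; last first.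
  by apply: sumr_ge0 => k _; rewrite -expr2 sqr_ge0.
apply: contra w0 => /eqP h; apply/eqP/rowP => k; rewrite mxE.
have nn : forall k', predT k' -> 0 <= w 0 k' * w 0 k' by move=> k' _; rewrite -expr2 sqr_ge0.
have := psumr_eq0P nn h (i:=k) isT; move/eqP; rewrite -expr2 sqrf_eq0 => /eqP //.
Qed.

Lemma exists_neg (w : 'rV[rat]_n) : w != 0 -> exists2 u, u \in U & dot u w < 0.
Proof.
move=> w0.
have [/hasP [u uU hu]|/hasPn hno] := boolP (has (fun u => dot u w < 0) U).
  by exists u.
exfalso.
case: Hrefl => _ _ [V [_ HV]] _.
pose B := \sum_(j < size V) `|dot w V`_j|.
have B0 : 0 <= B by apply: sumr_ge0 => j _; exact: normr_ge0.
have bnd x : conv_hull V x -> dot w x <= B.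
  move=> [lam [l0 l1 ->]]; rewrite dot_sum.
  apply: (@le_trans _ _ (\sum_j lam j * B)); last by rewrite -big_distrl /= l1 mul1r.
  apply: ler_sum => j _; apply: ler_wpM2l => //.
  apply: (le_trans (ler_norm _)).
  by rewrite /B (bigD1 j) //= lerDl sumr_ge0 // => k _; exact: normr_ge0.
have dp := dot_pos w0.
pose lam := (B + 1) / dot w w.
have lam0 : 0 <= lam by rewrite divr_ge0 // ?addr_ge0 // ltW.
have : in_polytope U (lam *: w).
  move=> u uU; rewrite dot_scale.
  have := hno u uU; rewrite /= -leNgt => h.
  apply: (@le_trans _ _ 0); first by rewrite lerN10.
  exact: mulr_ge0.
move/HV/bnd; rewrite dot_scale /lam divfK ?gt_eqF //.
move=> h; lra.
Qed.

Lemma ray (w : 'rV[rat]_n) : w != 0 -> exists2 t, t \in Lam & cone_relint vert t w.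
Proof.
move=> w0.
have [u1 u1U hu1] := exists_neg w0.
have [u0 u0U hu0] := max_seq (fun u => - dot u w) u1U.
set mu := - dot u0 w.
have mu0 : 0 < mu.
  rewrite /mu; apply: (lt_le_trans _ (hu0 u1 u1U)); by rewrite oppr_gt0.
pose p := mu^-1 *: w.
have hm : mu^-1 * mu = 1 by rewrite mulVf // gt_eqF.
have bp : on_boundary U p.
  split.
    move=> u uU; rewrite /p dot_scale -hm -mulrN; apply: ler_wpM2l.
      by rewrite invr_ge0 ltW.
    by rewrite lerNl; apply: hu0.
  exists u0 => //; by rewrite /p dot_scale -[dot u0 w]opprK -/mu mulrN hm.
have [_ Hcl _ Hcov _] := Hsd.
have [s sL [lam [l0 lout l1 hp]]] := (Hcov p).2 bp.
pose t := [set i | 0 < lam i].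
have ts : t \subset s.
  apply/subsetP => i; rewrite inE; apply: contraTT => /lout ->; by rewrite ltxx.
have t0 : t != set0.
  apply/set0Pn; apply/existsP; apply: contraT => /existsPn H.
  have : \sum_i lam i = 0.
    apply: big1 => i _; have := H i; rewrite inE => /negbTE h.
    by apply/eqP; rewrite eq_le l0 andbT leNgt h.
  by rewrite l1 => /eqP; rewrite oner_eq0.
exists t; first exact: Hcl ts t0.
exists (fun i => mu * lam i); split.
  by move=> i; rewrite inE => h; apply: mulr_gt0.
have -> : w = mu *: p by rewrite /p scalerA divff ?gt_eqF // scale1r.
rewrite hp scaler_sumr [RHS]big_mkcond /=; apply: eq_bigr => i _.
rewrite inE scalerA; case: ifP => // /negbT h.
have -> : lam i = 0 by apply/eqP; rewrite eq_le l0 andbT leNgt.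
by rewrite mulr0 scale0r.
Qed.


Lemma vert_neq0 i : vert i != 0.
Proof.
have [_ [u _ hu]] := vert_bd Hvert i.
apply/eqP => h; move: hu; rewrite h dot0 => /eqP; by rewrite eq_sym oppr_eq0 oner_eq0.
Qed.

Lemma n_pos (i : I) : (0 < n)%N.
Proof.
have [_ [u _ hu]] := vert_bd Hvert i.
rewrite lt0n; apply/eqP => n0; move: hu; rewrite /dot big1.
  by move/eqP; rewrite eq_sym oppr_eq0 oner_eq0.
by move=> k _; have := ltn_ord k; rewrite {2}n0.
Qed.

Lemma nonroot (p : {poly rat}) : p != 0 -> exists x, p.[x] != 0.
Proof.
move=> p0.
pose rs := [seq (i%:R : rat) | i <- iota 0 (size p)].
have urs : uniq rs.
  rewrite map_inj_uniq ?iota_uniq // => a b /eqP; by rewrite eqr_nat => /eqP.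
have : ~~ all (root p) rs.
  apply/negP => hall; have := max_poly_roots p0 hall urs.
  by rewrite size_map size_iota ltnn.
by case/allPn => x _ hx; exists x.
Qed.


Lemma top_exists (i0 : I) : exists s, top_simplex n Lam s.
Proof.
have npos := n_pos i0.
have [/exists_inP [s sL /eqP cs]|hno] := boolP [exists s in Lam, #|s| == n].
  by exists s.
exfalso.
have small s : s \in Lam -> (#|s| < n)%N.
  move=> sL; rewrite ltn_neqAle (card_le Hvert Hsd sL) andbT.
  apply: contra hno => e; apply/exists_inP; by exists s.
have hf s : exists f : 'rV[rat]_n, s \in Lam -> f != 0 /\ forall i, i \in s -> dot f (vert i) = 0.
  case: (boolP (s \in Lam)) => sL; last by exists 0.
  have nf : ~~ row_free (Mx vert s)^T.
    rewrite /row_free mxrank_tr; move: (Mx_free Hvert Hsd sL) => /eqP ->.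
    by rewrite neq_ltn small.
  have [v v0 hv] := ker_ex nf.
  exists v => _; split => // i iS.
  have := congr1 (fun M : 'rV_#|s| => M 0 (enum_rank_in iS i)) hv; rewrite !mxE => h.
  rewrite -h /dot; apply: eq_bigr => j _; by rewrite !mxE (enum_rankK_in iS iS).
have [F hF] := fin_all_exists hf.
pose E s (j : nat) := \sum_(k < n | val k == j) F s 0 k.
have hE s (k : 'I_n) : E s k = F s 0 k.
  by rewrite /E (big_pred1 k) // => k'; rewrite val_eqE.
pose P s : {poly rat} := \poly_(j < n) E s j.
have Pn0 s : s \in Lam -> P s != 0.
  move=> sL; have [f0 _] := hF s sL; apply: contra f0 => /eqP h; apply/eqP/rowP => k.
  have := coef_poly n (E s) k; rewrite -/(P s) h coef0 ltn_ord hE => <-; by rewrite !mxE.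
have PP : \prod_(s in Lam) P s != 0 by apply/prodf_neq0 => s sL; exact: Pn0.
have [x hx] := nonroot PP.
pose w : 'rV[rat]_n := \row_(j < n) x ^+ j.
have w0 : w != 0.
  apply/eqP => h; have := congr1 (fun M : 'rV_n => M 0 (Ordinal npos)) h.
  by rewrite !mxE expr0 => /eqP; rewrite oner_eq0.
have [t tL [lam [lpos hw]]] := ray w0.
have [_ hft] := hF t tL.
have e1 : dot (F t) w = 0.
  by rewrite hw dot_sumP big1 // => i it; rewrite hft // mulr0.
have e2 : dot (F t) w = (P t).[x].
  rewrite horner_poly /dot; apply: eq_bigr => k _; by rewrite mxE hE.
move: hx; rewrite horner_prod => /prodf_neq0 /(_ t tL).
by rewrite -e2 e1 eqxx.
Qed.


Lemma gen_nonneg s d' c : top_simplex n Lam s -> d' \notin s -> is_nvec vert s d' c ->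
  ~ perp_not_sub vert Lam s d' -> forall i, 0 <= c i.
Proof.
move=> [sL cs] dS gc hp.
have w0 : - vert d' != 0 by rewrite oppr_eq0 vert_neq0.
have [t tL [lam [lpos hw]]] := ray w0.
have ts : t \subset s.
  apply/negPn/negP => h; apply: hp; exists t; split => //; by exists lam.
pose c' : Dvec := [ffun i => (if i \in t then lam i else 0) + (i == d')%:R].
have dt : d' \notin t by apply: contra dS; apply: (subsetP ts).
have gc' : is_nvec vert s d' c'.
  split.
  - by rewrite ffunE (negbTE dt) eqxx add0r.
  - move=> i /negbTE id iS; rewrite ffunE id addr0.
    by have -> : (i \in t) = false by apply/negbTE; apply: contra iS; apply: (subsetP ts).
  - rewrite /beta.
    under eq_bigr => i _ do rewrite ffunE scalerDl.
    rewrite big_split /= sum_delta.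
    have -> : \sum_i (if i \in t then lam i else 0) *: vert i = - vert d'.
      rewrite hw [RHS]big_mkcond /=; apply: eq_bigr => i _; case: ifP => //.
      by rewrite scale0r.
    by rewrite addNr.
have -> : c = c' by apply: (gen_unique Hvert Hsd sL gc gc').
move=> i; rewrite ffunE; apply: addr_ge0; last by rewrite ler0n.
case: ifP => // it; exact: ltW (lpos i it).
Qed.

End Ray.



Lemma fin_uniform (T : finType) (P : T -> rat -> Prop) :
  (forall t, exists2 e, 0 < e & forall e', 0 < e' -> e' <= e -> P t e') ->
  exists2 e, 0 < e & forall t, P t e.
Proof.
move=> H; have [f f0 hf] := fin_all_exists2 H.
pose S := \sum_t (f t)^-1.
have S0 : 0 <= S by apply: sumr_ge0 => t _; rewrite invr_ge0 ltW.
exists (1 + S)^-1; first by rewrite invr_gt0; lra.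
move=> t; apply: hf; first by rewrite invr_gt0; lra.
rewrite -[f t]invrK lef_pV2 ?posrE ?invr_gt0 //; last by lra.
rewrite /S (bigD1 t) //=.
have : 0 <= \sum_(i | i != t) (f i)^-1 by apply: sumr_ge0 => i _; rewrite invr_ge0 ltW.
lra.
Qed.

Lemma nabs (x : rat) : - `|x| <= x.
Proof. by have := lexx `|x|; rewrite ler_norml => /andP []. Qed.

Section Int.
Variable n : nat.
Variable U : seq 'rV[rat]_n.
Variables (I : finType) (vert : I -> 'rV[rat]_n).
Variable Lam : {set {set I}}.
Hypothesis Hrefl : is_reflexive U.
Hypothesis Hvert : is_vertex_set U vert.
Hypothesis Hsd : simplicial_decomp U vert Lam.
Local Notation Dvec := {ffun I -> rat}.

Lemma pair_pert (rho rho' c : Dvec) (e : rat) : (forall i, `|rho' i - rho i| <= e) ->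
  pair rho c - e * \sum_i `|c i| <= pair rho' c.
Proof.
move=> h.
have E : pair rho' c = pair rho c + \sum_i (rho' i - rho i) * c i.
  rewrite /pair -big_split /=; apply: eq_bigr => i _; ring.
rewrite E mulr_sumr -sumrN lerD2l; apply: ler_sum => i _.
apply: (le_trans _ (nabs _)); rewrite lerN2 normrM; apply: ler_wpM2r => //.
Qed.

Lemma int_Cplus (rho : Dvec) : interior_D (C_plus vert Lam) rho <->
  forall c, nLam_gen vert Lam c -> 0 < pair rho c.
Proof.
split.
- move=> [e e0 H] c gc.
  have gc' := gc; case: gc' => s [d' [ts dS [c1 _ _]]].
  pose rho' : Dvec := [ffun i => rho i - e * (i == d')%:R].
  have hr : C_plus vert Lam rho'.
    apply: H => i; rewrite ffunE addrAC subrr add0r normrN normrM gtr0_norm //.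
    by case: (i == d'); rewrite ?mulr1 ?mulr0 ?normr0 ?normr1 // ltW.
  have := (Cplus_Gpos Hvert Hsd rho').1 hr c gc.
  have -> : pair rho' c = pair rho c - e.
    rewrite /pair (bigD1 d') //= [X in _ = X - _](bigD1 d') //= !ffunE eqxx c1.
    rewrite [in X in _ = X]mulr1 mulr1.
    have -> : \sum_(i | i != d') rho' i * c i = \sum_(i | i != d') rho i * c i.
      by apply: eq_bigr => i /negbTE id; rewrite ffunE id mulr0 subr0.
    rewrite mulr1; ring.
  move=> h; lra.
- move=> H.
  pose valid (t : {set I} * I) := [&& t.1 \in Lam, #|t.1| == n & t.2 \notin t.1].
  pose P (t : {set I} * I) (e : rat) := forall rho' : Dvec, (forall i, `|rho' i - rho i| <= e) ->
     valid t -> forall c, is_nvec vert t.1 t.2 c -> 0 <= pair rho' c.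
  have : exists2 e, 0 < e & forall t, P t e.
    apply: fin_uniform => [[s d']].
    have [/and3P [sL /eqP cs dS]|nv] := boolP (valid (s, d')); last first.
      by exists 1 => // e' _ _ rho' _ /(negP nv).
    have [c gc] := gen_exists Hvert Hsd (conj sL cs) dS.
    have pc : 0 < pair rho c by apply: H; exists s, d'.
    pose M := \sum_i `|c i| + 1.
    have M0 : 0 < M.
      rewrite /M; have : 0 <= \sum_i `|c i| by apply: sumr_ge0 => i _; exact: normr_ge0.
      lra.
    exists (pair rho c / M); first exact: divr_gt0.
    move=> e' e0 ee rho' hr _ c' gc'.
    have <- := gen_unique Hvert Hsd sL gc gc'.
    apply: (le_trans _ (pair_pert c hr)).
    have h1 : e' * \sum_i `|c i| <= pair rho c / M * \sum_i `|c i|.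
      by apply: ler_wpM2r => //; apply: sumr_ge0.
    have h2 : pair rho c / M * \sum_i `|c i| <= pair rho c.
      rewrite mulrAC ler_pdivrMr //; apply: ler_wpM2l; [exact: ltW | rewrite /M lerDl //].
    lra.
  move=> [e e0 hP]; exists e => // rho' hr.
  apply/(Cplus_Gpos Hvert Hsd) => c [s [d' [[sL cs] dS gc]]].
  apply: (hP (s, d')) => //; apply/and3P; split => //; exact/eqP.
Qed.

End Int.



Section Ext.
Variable n : nat.
Variable U : seq 'rV[rat]_n.
Variables (I : finType) (vert : I -> 'rV[rat]_n).
Variable Lam : {set {set I}}.
Hypothesis Hrefl : is_reflexive U.
Hypothesis Hvert : is_vertex_set U vert.
Hypothesis Hsd : simplicial_decomp U vert Lam.
Local Notation Dvec := {ffun I -> rat}.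

Lemma extend_phi s (ts : top_simplex n Lam s) (phi : Dvec -> rat) :
  linear_on_K vert phi ->
  exists G : I -> Dvec, (forall d', d' \notin s -> is_nvec vert s d' (G d')) /\
    (forall k, in_kernel vert k -> phi k = pair [ffun d' => if d' \in s then 0 else phi (G d')] k).
Proof.
move=> lin.
have hG d' : exists c : Dvec, d' \notin s -> is_nvec vert s d' c.
  case: (boolP (d' \in s)) => dS; first by exists 0.
  by have [c gc] := gen_exists Hvert Hsd ts dS; exists c.
have [G hG'] := fin_all_exists hG.
exists G; split => // k kk.
pose G' d' : Dvec := if d' \in s then [ffun => 0] else G d'.
have kG' d' : in_kernel vert (G' d').
  rewrite /G'; case: ifP => dS; first exact: kernel0.
  by case: (hG' d' (negbT dS)).
pose k' : Dvec := [ffun i => \sum_d' k d' * G' d' i].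
have kk' : in_kernel vert k' by apply: kernel_comb.
have out i : i \notin s -> k' i = k i.
  move=> iS; rewrite ffunE (bigD1 i) //= /G' (negbTE iS).
  have [g1 _ _] := hG' i iS.
  rewrite g1 mulr1 big1 ?addr0 // => d' di.
  case: ifP => dS; first by rewrite ffunE mulr0.
  have [_ gz _] := hG' d' (negbT dS).
  by rewrite gz ?mulr0 // eq_sym.
have ekk : k = k'.
  have H := lin_indep Hvert Hsd ts.1 (a := fun i => k i - k' i).
  apply/ffunP => i; apply/eqP; rewrite -subr_eq0; apply/eqP; apply: H.
  - by move=> j jS; rewrite out // subrr.
  - under eq_bigr => j _ do rewrite scalerBl.
    by rewrite sumrB -/(beta vert k) -/(beta vert k') kk kk' subrr.
have -> : phi k = phi k' by rewrite -ekk.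
rewrite /k' (linK_comb _ lin kG') /pair; apply: eq_bigr => i _; rewrite ffunE /G'.
case: ifP => iS; first by rewrite (linK0 lin) mul0r mulr0.
by rewrite mulrC.
Qed.

Lemma gen_of s d' c : top_simplex n Lam s -> d' \notin s -> is_nvec vert s d' c ->
  nLam_gen vert Lam c.
Proof. by move=> ts dS gc; exists s, d'. Qed.

Lemma pair_ge_coord (rho c : Dvec) d : (forall i, 0 <= rho i) -> (forall i, 0 <= c i) ->
  rho d * c d <= pair rho c.
Proof.
move=> hr hc; rewrite /pair (bigD1 d) //= lerDl; apply: sumr_ge0 => i _; exact: mulr_ge0.
Qed.

End Ext.



Lemma kernel_scale n (I : finType) (vert : I -> 'rV[rat]_n) (a : rat) (c : {ffun I -> rat}) :
  in_kernel vert c -> in_kernel vert [ffun i => a * c i].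
Proof.
move=> kc; rewrite /in_kernel /beta.
under eq_bigr do rewrite ffunE -scalerA.
by rewrite -scaler_sumr -/(beta vert c) kc scaler0.
Qed.

Theorem proposition2p1 (n : nat) (U : seq 'rV[rat]_n) (I : finType)
    (vert : I -> 'rV[rat]_n) (Lam : {set {set I}}) :
  is_reflexive U ->
  is_vertex_set U vert ->
  generates_lattice vert ->
  simplicial_decomp U vert Lam ->
  (* (I) *)
  (forall rho, C_plus vert Lam rho <-> hat_nLam vert Lam rho) /\
  (* (II), first equality *)
  (forall rho, (C_plus vert Lam rho /\ D_plus rho) <->
     (D_plus rho /\
      forall s d', top_simplex n Lam s -> d' \notin s -> perp_not_sub vert Lam s d' ->
        forall c, is_nvec vert s d' c -> 0 <= pair rho c)) /\
  (* (II), second equality *)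
  (forall rho, (interior_D (C_plus vert Lam) rho /\ D_plus_int rho) <->
     (D_plus_int rho /\
      forall s d', top_simplex n Lam s -> d' \notin s -> perp_not_sub vert Lam s d' ->
        forall c, is_nvec vert s d' c -> 0 < pair rho c)) /\
  (* iota^*(C_+ /\ D_+) = n^dagger_{Lambda,+} *)
  (forall phi, linear_on_K vert phi ->
     (iota_star_image vert (fun rho => C_plus vert Lam rho /\ D_plus rho) phi <->
      ndag_plus vert Lam phi)) /\
  (* iota^*(Int C_+ /\ Int D_+) = Int n^dagger_{Lambda,+} *)
  (forall phi, linear_on_K vert phi ->
     (iota_star_image vert (fun rho => interior_D (C_plus vert Lam) rho /\ D_plus_int rho) phi <->
      interior_ndag vert (ndag_plus vert Lam) phi)).
Proof.
move=> Hrefl Hvert _ Hsd.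
have HI rho : C_plus vert Lam rho <-> hat_nLam vert Lam rho.
  exact: (iff_trans (Cplus_Gpos Hvert Hsd rho) (Gpos_hat _ _ rho)).
split => //.
split.
  move=> rho; split.
  - move=> [hC hD]; split => // s d' ts dS _ c gc.
    exact: (Cplus_Gpos Hvert Hsd rho).1 hC c (gen_of ts dS gc).
  - move=> [hD hR]; split => //; apply/(Cplus_Gpos Hvert Hsd) => c [s [d' [ts dS gc]]].
    case: (classic (perp_not_sub vert Lam s d')) => hp; first exact: (hR s d' ts dS hp c gc).
    apply: sumr_ge0 => i _; apply: mulr_ge0 => //.
    exact: (gen_nonneg Hrefl Hvert Hsd ts dS gc hp i).
split.
  move=> rho; split.
  - move=> [hI hD]; split => // s d' ts dS _ c gc.
    exact: (int_Cplus Hvert Hsd rho).1 hI c (gen_of ts dS gc).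
  - move=> [hD hR]; split => //; apply/(int_Cplus Hvert Hsd) => c [s [d' [ts dS gc]]].
    case: (classic (perp_not_sub vert Lam s d')) => hp; first exact: (hR s d' ts dS hp c gc).
    have [c1 _ _] := gc.
    apply: (lt_le_trans _ (pair_ge_coord d' (fun i => ltW (hD i))
               (gen_nonneg Hrefl Hvert Hsd ts dS gc hp))).
    by rewrite c1 mulr1.
split.
  move=> phi lin; split.
  - move=> [rho [hC hD] hk] x hx.
    rewrite hk; [exact: (HI rho).1 hC x hx | exact: cone_kernel hx].
  - move=> hN; case: (pickP (@predT I)) => [i0 _ | h0].
    + have [s ts] := top_exists Hrefl Hvert Hsd i0.
      have [G [hG hphi]] := extend_phi Hvert Hsd ts lin.
      exists [ffun d' => if d' \in s then 0 else phi (G d')]; last exact: hphi.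
      split.
        apply/(Cplus_Gpos Hvert Hsd) => c gc.
        rewrite -hphi; [apply: hN; exact: gen_cone gc | exact: gen_kernel gc].
      move=> d'; rewrite ffunE; case: ifP => // /negbT dS.
      apply: hN; apply: gen_cone; exact: gen_of ts dS (hG d' dS).
    + exists [ffun => 0].
        split; first by move=> s _ d'; have := h0 d'.
        by move=> i; have := h0 i.
      move=> k _; rewrite /pair big1; last by move=> i; have := h0 i.
      have -> : k = [ffun => 0] by apply/ffunP => i; have := h0 i.
      exact: linK0 lin.
move=> phi lin; split.
- move=> [rho [hI hD] hk].
  have hpos := (int_Cplus Hvert Hsd rho).1 hI.
  pose valid (t : {set I} * I) := [&& t.1 \in Lam, #|t.1| == n & t.2 \notin t.1].
  pose P (t : {set I} * I) (e : rat) := forall psi : {ffun I -> rat} -> rat,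
     linear_on_K vert psi ->
     (forall k, in_kernel vert k -> (forall i, `|k i| <= 1) -> `|psi k - phi k| <= e) ->
     valid t -> forall c, is_nvec vert t.1 t.2 c -> 0 <= psi c.
  have [e e0 hP] : exists2 e, 0 < e & forall t, P t e.
    apply: fin_uniform => [[s d']].
    have [/and3P [sL /eqP cs dS]|nv] := boolP (valid (s, d')); last first.
      by exists 1 => // e' _ _ psi _ _ /(negP nv).
    have ts : top_simplex n Lam s by [].
    have [c gc] := gen_exists Hvert Hsd ts dS.
    have kc : in_kernel vert c by case: gc.
    have pc : 0 < pair rho c by apply: hpos; exists s, d'.
    pose M := \sum_i `|c i|.
    have cM i : `|c i| <= M.
      by rewrite /M (bigD1 i) //= lerDl; apply: sumr_ge0 => j _; exact: normr_ge0.
    have M0 : 0 < M.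
      apply: (lt_le_trans _ (cM d')); have [c1 _ _] := gc; by rewrite c1 normr1.
    exists (pair rho c / M); first exact: divr_gt0.
    move=> e' e0 ee psi lp hb _ c' gc'.
    have <- := gen_unique Hvert Hsd sL gc gc'.
    pose kc' : {ffun I -> rat} := [ffun i => M^-1 * c i].
    have kk : in_kernel vert kc' by apply: kernel_scale.
    have bk : forall i, `|kc' i| <= 1.
      have Mi : 0 <= M^-1 by rewrite invr_ge0 ltW.
      move=> i; rewrite ffunE normrM (ger0_norm Mi) mulrC ler_pdivrMr // mul1r.
      exact: cM.
    have ec : c = [ffun i => M * kc' i].
      apply/ffunP => i; rewrite !ffunE mulrA divff ?mul1r //; exact: lt0r_neq0.
    have hpsi : psi c = M * psi kc' by rewrite {1}ec (linK_scale _ lp kk).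
    have hphi : phi kc' = M^-1 * pair rho c by rewrite (linK_scale _ lin kc) hk.
    have := hb kc' kk bk; rewrite hphi ler_norml => /andP [h1 _].
    rewrite hpsi; apply: mulr_ge0; first exact: ltW.
    have : e' <= M^-1 * pair rho c by rewrite mulrC.
    lra.
  exists e => // psi lp hb x [m [lam [g [hg ->]]]].
  rewrite (linK_comb _ lp); last by move=> j; apply: gen_kernel; exact: (hg j).2.
  apply: sumr_ge0 => j _; have [l0 [s [d' [[sL cs] dS gc]]]] := hg j.
  apply: mulr_ge0 => //; apply: (hP (s, d')) => //.
  by apply/and3P; split => //; apply/eqP.
- move=> [e e0 hN].
  have hstr c : nLam_gen vert Lam c -> 0 < phi c.
    move=> gc; have [s [d' [ts dS [c1 _ _]]]] := gc.
    pose psi := fun k : {ffun I -> rat} => phi k - e * k d'.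
    have lp : linear_on_K vert psi.
      move=> a b x y kx ky; rewrite /psi lin // ffunE; ring.
    have hb : forall k, in_kernel vert k -> (forall i, `|k i| <= 1) -> `|psi k - phi k| <= e.
      move=> k _ h; rewrite /psi.
      have -> : phi k - e * k d' - phi k = - (e * k d') by ring.
      rewrite normrN normrM gtr0_norm // -[X in _ <= X]mulr1.
      by apply: ler_wpM2l; [exact: ltW | exact: h].
    have := hN psi lp hb c (gen_cone gc); rewrite /psi c1 mulr1 => h; lra.
  case: (pickP (@predT I)) => [i0 _ | h0].
  + have [s ts] := top_exists Hrefl Hvert Hsd i0.
    have [G [hG hphi]] := extend_phi Hvert Hsd ts lin.
    set rho0 : {ffun I -> rat} := [ffun d' => if d' \in s then 0 else phi (G d')] in hphi.
    have [y hy] := solve_top Hvert Hsd ts.1 ts.2 (fun _ => 1).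
    have [dl dl0 hdl] : exists2 dl, 0 < dl & forall i, 0 < rho0 i + dl * dot y (vert i).
      apply: fin_uniform => i.
      case: (boolP (i \in s)) => iS.
        exists 1 => // e' e'0 _; by rewrite /rho0 ffunE iS hy // add0r mulr1.
      have r0 : 0 < rho0 i by rewrite /rho0 ffunE (negbTE iS); apply: hstr; exact: gen_of ts iS (hG i iS).
      set r := rho0 i; set a := `|dot y (vert i)|.
      have a0 : 0 <= a by exact: normr_ge0.
      have a1 : 0 < a + 1 by lra.
      exists (r / (a + 1)); first exact: divr_gt0.
      move=> dd dd0 ddle.
      have h1 : - (dd * a) <= dd * dot y (vert i).
        by have := nabs (dd * dot y (vert i)); rewrite normrM (ger0_norm (ltW dd0)).
      have h2 : dd * a <= r / (a + 1) * a by apply: ler_wpM2r.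
      have h3 : r / (a + 1) * a < r.
        by rewrite mulrAC ltr_pdivrMr // ltr_pM2l //; lra.
      lra.
    pose rho : {ffun I -> rat} := [ffun i => rho0 i + dl * dot y (vert i)].
    have hk k : in_kernel vert k -> phi k = pair rho k.
      move=> kk; rewrite hphi //.
      have E : pair rho k = pair rho0 k + dl * pair [ffun i => dot y (vert i)] k.
        rewrite /pair big_distrr -big_split /=; apply: eq_bigr => i _; rewrite !ffunE; ring.
      by rewrite E pair_betastar kk dot0 mulr0 addr0.
    exists rho; last exact: hk.
    split; last by move=> i; rewrite ffunE.
    apply/(int_Cplus Hvert Hsd) => c gc; rewrite -hk; [exact: hstr gc | exact: gen_kernel gc].
  + exists [ffun => 0].
      split; last by move=> i; have := h0 i.
      exists 1 => // rho' _ s _ d'; by have := h0 d'.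
    move=> k _; rewrite /pair big1; last by move=> i; have := h0 i.
    have -> : k = [ffun => 0] by apply/ffunP => i; have := h0 i.
    exact: linK0 lin.
Qed.
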